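(* Let $d$ be a positive integer and let $A \in \mathbb{R}^{[m]\times[n]}$. Suppose that for every vector $b\in\mathbb{R}^{[m]}$ the solution graph $G(R(A,b))$ is connected. If $m\le 3$ or $n\le 2$, then $A$ has an elimination ordering.
   Context: Fix a positive integer $d$ and let $D=\{0,1,\dots,d\}$; $[n]=\{1,\dots,n\}$. For $A\in\mathbb{R}^{[m]\times[n]}$ and $b\in\mathbb{R}^{[m]}$, $R(A,b)=\{x\in D^{[n]} : Ax\ge b\}$. For $R\subseteq D^{[n]}$, the solution graph $G(R)$ is the undirected graph with vertex set $R$ in which $x,y$ are adjacent iff they differ in exactly one coordinate. A matrix $A=(a_{ij})$ with column index set $J$ can be eliminated at column $j\in J$ if (i) for every row $i$ with $a_{ij}>0$ we have $a_{ij'}=0$ for all $j'\in J\setminus\{j\}$, or (ii) for every row $i$ with $a_{ij}<0$ we have $a_{ij'}=0$ for all $j'\in J\setminus\{j\}$. For $J'\subseteq[n]$, $\mathrm{elm}(A,J')$ is the submatrix of $A$ obtained by deleting the columns indexed by $J'$. A sequence $(j_1,\dots,j_n)$ of the elements of $[n]$ is an elimination ordering (EO) of $A$ if for every $t\in[n]$ the matrix $\mathrm{elm}(A,\{j_1,\dots,j_{t-1}\})$ can be eliminated at column $j_t$. *)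

(* Defs.v *)
From HB Require Import structures.
From mathcomp Require Import all_boot all_order all_algebra.
From mathcomp Require Import reals.
Set Implicit Arguments. Unset Strict Implicit. Unset Printing Implicit Defensive.
Import Order.TTheory GRing.Theory Num.Theory.
Local Open Scope ring_scope.

(* Points of D^[n] with D = {0,...,d}: finite functions 'I_n -> 'I_d.+1. *)
Definition point (d n : nat) := {ffun 'I_n -> 'I_d.+1}.

Definition solset (R : realType) (d m n : nat) (A : 'M[R]_(m, n)) (b : 'I_m -> R)
  : {set point d n} :=
  [set x : point d n | [forall i : 'I_m,
      b i <= \sum_(j < n) A i j * ((x j : nat)%:R)]].

Definition adj1 (d n : nat) (x y : point d n) : bool :=
  #|[set j : 'I_n | x j != y j]| == 1%N.

Definition sol_edge (d n : nat) (S : {set point d n}) : rel (point d n) :=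
  fun x y => [&& x \in S, y \in S & adj1 x y].

(* G(S) is connected: any two vertices are joined by a path inside S
   (the graph with empty vertex set counts as connected). *)
Definition sol_graph_connected (d n : nat) (S : {set point d n}) : Prop :=
  forall x y, x \in S -> y \in S -> connect (sol_edge S) x y.

Definition can_elim (R : realType) (m n : nat) (A : 'M[R]_(m, n))
  (J : {set 'I_n}) (j : 'I_n) : bool :=
  (j \in J) &&
  ([forall i : 'I_m, (0 < A i j) ==>
       [forall j' in J, (j' != j) ==> (A i j' == 0)]]
   || [forall i : 'I_m, (A i j < 0) ==>
       [forall j' in J, (j' != j) ==> (A i j' == 0)]]).

Fixpoint elim_seq (R : realType) (m n : nat) (A : 'M[R]_(m, n))
  (J : {set 'I_n}) (s : seq 'I_n) : bool :=
  match s with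
  | [::] => true
  | j :: s' => can_elim A J j && elim_seq A (J :\ j) s'
  end.

Definition elimination_ordering (R : realType) (m n : nat) (A : 'M[R]_(m, n))
  (s : seq 'I_n) : bool :=
  perm_eq s (enum 'I_n) && elim_seq A [set: 'I_n] s.

Definition has_EO (R : realType) (m n : nat) (A : 'M[R]_(m, n)) : Prop :=
  exists s : seq 'I_n, elimination_ordering A s.

(* Main.v *)
Require Import Defs.
From HB Require Import structures.
From mathcomp Require Import all_boot all_order all_algebra.
From mathcomp Require Import reals.
From mathcomp Require Import ring lra zify.
Set Implicit Arguments. Unset Strict Implicit. Unset Printing Implicit Defensive.
Import Order.TTheory GRing.Theory Num.Theory.
Local Open Scope ring_scope.

Lemma mul_neg_cases (R : realType) (a b : R) : a * b < 0 -> (0 < a /\ b < 0) \/ (a < 0 /\ 0 < b).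
Proof.
move=> H; have [a0|a0|a0] := ltrgtP a 0; have [b0|b0|b0] := ltrgtP b 0; try by [left|right].
all: exfalso; subst; nra.
Qed.

Lemma mul_neg3 (R : realType) (a b c : R) : a * c < 0 -> b != 0 -> a * b < 0 \/ b * c < 0.
Proof.
move=> H /eqP bn; have [a0|a0|a0] := ltrgtP a 0; have [b0|b0|b0] := ltrgtP b 0; try by exfalso; subst; nra.
all: try (left; nra); try (right; nra).
Qed.

Lemma connect_map (T : finType) (e e' : rel T) (f : T -> T) :
  (forall u v, e u v -> connect e' (f u) (f v)) ->
  forall x y, connect e x y -> connect e' (f x) (f y).
Proof.
move=> H x y /connectP [p]; elim: p x => [|z p IH] x /=; first by move=> _ ->.
move=> /andP [exz pz] ly; exact: connect_trans (H _ _ exz) (IH _ pz ly).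
Qed.

Lemma connect_inv (T : finType) (e : rel T) (P : pred T) :
  (forall u v, P u -> e u v -> P v) -> forall x y, P x -> connect e x y -> P y.
Proof.
move=> H x y Px /connectP [p]; elim: p x Px => [|z p IH] x Px /=; first by move=> _ ->.
move=> /andP [exz pz] ly; exact: IH (H _ _ Px exz) pz ly.
Qed.

Lemma can_elim_eq (R : realType) m n (A B : 'M[R]_(m,n)) (J : {set 'I_n}) (k : 'I_n) :
  (forall i j, j \in J -> A i j = B i j) -> can_elim A J k = can_elim B J k.
Proof.
move=> E; rewrite /can_elim; case kJ: (k \in J) => //=.
congr (_ || _); apply: eq_forallb => i; rewrite E //; congr (_ ==> _);
  apply: eq_forallb => j'; case j'J: (j' \in J) => //=; rewrite E //.
Qed.

Lemma elim_seq_eq (R : realType) m n (A B : 'M[R]_(m,n)) (J : {set 'I_n}) (s : seq 'I_n) :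
  (forall i j, j \in J -> A i j = B i j) -> elim_seq A J s = elim_seq B J s.
Proof.
elim: s J => //= k s IH J E; rewrite (can_elim_eq k E) (IH (J :\ k)) // => i j.
rewrite in_setD1 => /andP [_ ?]; exact: E.
Qed.

Lemma can_elim_mono (R : realType) m n (A : 'M[R]_(m,n)) (J J' : {set 'I_n}) (k : 'I_n) :
  can_elim A J k -> k \in J' -> J' \subset J -> can_elim A J' k.
Proof.
rewrite /can_elim => /andP [_ H] kJ' sJ; rewrite kJ' /=.
case/orP: H => H; [apply/orP; left|apply/orP; right]; apply/forallP => i; apply/implyP => Hi;
 move: (forallP H i) => /implyP /(_ Hi) /forallP H2; apply/forallP => j'; apply/implyP => j'J;
 exact: (implyP (H2 j')) (subsetP sJ _ j'J).
Qed.

Lemma elim_seq_rem (R : realType) m n (A : 'M[R]_(m,n)) (J : {set 'I_n}) (s : seq 'I_n) (j : 'I_n) :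
  elim_seq A J s -> elim_seq A (J :\ j) (rem j s).
Proof.
elim: s J => //= k s IH J /andP [ck es].
case: eqP => [<-|/eqP kj] //=.
have kJ : k \in J by case/andP: ck.
rewrite (can_elim_mono ck) ?subD1set //=; last by rewrite in_setD1 kj.
have -> : J :\ j :\ k = J :\ k :\ j by apply/setP => x; rewrite !in_setD1 andbCA.
exact: IH.
Qed.

Definition zcol (R : realType) m n (A : 'M[R]_(m,n)) (j : 'I_n) : 'M[R]_(m,n) :=
  \matrix_(i, k) if k == j then 0 else A i k.

Definition nzcol (R : realType) m n (A : 'M[R]_(m,n)) (j : 'I_n) := [exists i, A i j != 0].

Lemma EO_lift (R : realType) m n (A : 'M[R]_(m,n)) (j : 'I_n) :
  can_elim A setT j -> has_EO (zcol A j) -> has_EO A.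
Proof.
move=> cj [s0 /andP [ps0 es0]].
have js0 : j \in s0 by rewrite (perm_mem ps0) mem_enum.
exists (j :: rem j s0); rewrite /elimination_ordering /= cj /=; apply/andP; split.
  by apply: (@perm_trans _ s0) => //; rewrite perm_sym perm_to_rem.
rewrite (@elim_seq_eq _ _ _ _ (zcol A j)); first exact: elim_seq_rem es0.
by move=> i k; rewrite in_setD1 mxE => /andP [/negbTE -> _].
Qed.

Lemma EO_zero (R : realType) m n (A : 'M[R]_(m,n)) :
  (forall j, ~~ nzcol A j) -> has_EO A.
Proof.
move=> H; exists (enum 'I_n); rewrite /elimination_ordering perm_refl /=.
suff: forall (s : seq 'I_n) (J : {set 'I_n}), uniq s -> {subset s <= J} -> elim_seq A J s.
  by apply; [exact: enum_uniq | move=> x; rewrite in_setT].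
elim=> //= k s IH J /andP [ks us] sJ; apply/andP; split.
  rewrite /can_elim sJ ?mem_head //=; apply/orP; left; apply/forallP => i.
  by move/existsPn: (H k) => /(_ i); rewrite negbK => /eqP ->; rewrite ltxx.
apply: IH => // x xs; rewrite in_setD1 sJ ?andbT; last by rewrite inE xs orbT.
by apply/eqP => xk; subst; rewrite xs in ks.
Qed.

Definition conn (R : realType) (d m n : nat) (A : 'M[R]_(m,n)) :=
  forall b : 'I_m -> R, sol_graph_connected (solset d A b).

Definition setc (d n : nat) (x : point d n) (j : 'I_n) (c : 'I_d.+1) : point d n :=
  [ffun k => if k == j then c else x k].

Lemma adj1C d n (x y : point d n) : Defs.adj1 x y = Defs.adj1 y x.
Proof.
rewrite /Defs.adj1; have -> // : [set k | x k != y k] = [set k | y k != x k] by apply/setP => k; rewrite !inE eq_sym.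
Qed.

Lemma adj1_setc d n (x : point d n) j c : x j != c -> Defs.adj1 x (setc x j c).
Proof.
move=> xc; rewrite /Defs.adj1 (_ : [set k | _] = [set j]) ?cards1 //.
apply/setP => k; rewrite !inE ffunE; have [->|kj] := eqVneq k j; first by rewrite xc; apply/esym/eqP.
by rewrite eqxx.
Qed.

Lemma adj1_setc2 d n (u v : point d n) j c : Defs.adj1 u v ->
  setc u j c = setc v j c \/ Defs.adj1 (setc u j c) (setc v j c).
Proof.
rewrite /Defs.adj1 => /eqP H.
have E : [set k | setc u j c k != setc v j c k] = [set k | u k != v k] :\ j.
  by apply/setP => k; rewrite !inE !ffunE; have [->|kj] := eqVneq k j; rewrite ?eqxx // kj.
case jD: (j \in [set k | u k != v k]).
  left; apply/ffunP => k; apply/eqP; apply/negPn/negP => Hk.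
  have : k \in [set k | setc u j c k != setc v j c k] by rewrite inE.
  have : #|[set k | u k != v k] :\ j| = 0%N.
    by move: H; rewrite (cardsD1 j) jD add1n => -[].
  by move/eqP; rewrite cards_eq0 -E => /eqP ->; rewrite inE.
right; rewrite E (_ : [set k | u k != v k] :\ j = [set k | u k != v k]) ?H //.
apply/setP => k; rewrite in_setD1; case: eqVneq => // ->; by rewrite jD.
Qed.

Lemma sum_zcol (R : realType) d m n (A : 'M[R]_(m,n)) j i (x : point d n) :
  \sum_k A i k * ((x k : nat)%:R) = \sum_k (zcol A j) i k * ((x k : nat)%:R) + A i j * ((x j : nat)%:R).
Proof.
rewrite (bigD1 j) //= [X in _ = X + _](bigD1 j) //= !mxE eqxx mul0r add0r addrC; congr (_ + _).
by apply: eq_bigr => k kj; rewrite mxE (negbTE kj).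
Qed.

Lemma sum_zcol_setc (R : realType) d m n (A : 'M[R]_(m,n)) j i (x : point d n) c :
  \sum_k (zcol A j) i k * ((setc x j c k : nat)%:R) = \sum_k (zcol A j) i k * ((x k : nat)%:R).
Proof.
by apply: eq_bigr => k _; rewrite !mxE ffunE; case: eqP => _; rewrite ?mul0r.
Qed.

Lemma conn_zcol (R : realType) d m n (A : 'M[R]_(m,n)) j :
  can_elim A setT j -> conn d A -> conn d (zcol A j).
Proof.
move=> cj cA b' x y xS yS.
set A0 := zcol A j.
have [c Hc] : exists c : 'I_d.+1, forall i (t : 'I_d.+1),
    A i j * ((c : nat)%:R) < A i j * ((t : nat)%:R) -> forall k, k != j -> A i k = 0.
  case/andP: cj => _ /orP [H|H].
    exists ord0 => i t /= Hlt k kj.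
    have Ap : 0 < A i j.
      rewrite mulr0 in Hlt; rewrite ltNge; apply/negP => Hn.
      by move: Hlt; rewrite ltNge mulr_le0_ge0.
    by move: (forallP H i) => /implyP /(_ Ap) /forallP /(_ k); rewrite in_setT kj /= => /eqP.
  exists ord_max => i t /= Hlt k kj.
  have An : A i j < 0.
    rewrite ltNge; apply/negP => Hn; move: Hlt; rewrite ltNge ler_wpM2l //.
    by rewrite ler_nat -ltnS ltn_ord.
  by move: (forallP H i) => /implyP /(_ An) /forallP /(_ k); rewrite in_setT kj /= => /eqP.
pose b i := b' i + A i j * ((c : nat)%:R).
pose pi z := setc z j c.
have zrow : forall i, (forall k, k != j -> A i k = 0) -> forall z : point d n,
    \sum_k A0 i k * ((z k : nat)%:R) = 0.
  move=> i Hi z; apply: big1 => k _; rewrite mxE; case: eqP => [_|/eqP kj]; first by rewrite mul0r.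
  by rewrite Hi // mul0r.
have F1 : forall z, z \in solset d A b -> z \in solset d A0 b'.
  move=> z; rewrite !inE => /forallP H; apply/forallP => i; move: (H i).
  rewrite (sum_zcol A j) /b.
  have [Hlt|Hge] := ltP (A i j * ((c : nat)%:R)) (A i j * ((z j : nat)%:R)).
    move=> _; rewrite (zrow i (Hc i _ Hlt)).
    by move: xS; rewrite inE => /forallP /(_ i); rewrite (zrow i (Hc i _ Hlt)).
  by move=> HH; lra.
have F3 : forall z, (pi z \in solset d A0 b') = (z \in solset d A0 b').
  by move=> z; rewrite !inE; apply: eq_forallb => i; rewrite sum_zcol_setc.
have F2 : forall z, z \in solset d A0 b' -> pi z \in solset d A b.
  move=> z; rewrite !inE => /forallP H; apply/forallP => i; move: (H i).
  rewrite (sum_zcol A j) sum_zcol_setc /b /pi ffunE eqxx; lra.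
have Hedge : forall u v, sol_edge (solset d A b) u v ->
    connect (sol_edge (solset d A0 b')) (pi u) (pi v).
  move=> u v /and3P [uS vS uv].
  have puS : pi u \in solset d A0 b' by rewrite F3 F1.
  have pvS : pi v \in solset d A0 b' by rewrite F3 F1.
  case: (adj1_setc2 j c uv) => [Heq|Hadj]; first by rewrite /pi Heq connect0.
  by apply: connect1; rewrite /sol_edge puS pvS.
have Hx : forall z, z \in solset d A0 b' -> connect (sol_edge (solset d A0 b')) z (pi z).
  move=> z zS; have [zc|zc] := eqVneq (z j) c.
    have -> : pi z = z by apply/ffunP => k; rewrite ffunE; case: eqP => // ->.
    exact: connect0.
  by apply: connect1; rewrite /sol_edge zS F3 zS adj1_setc.
have Hy : forall z, z \in solset d A0 b' -> connect (sol_edge (solset d A0 b')) (pi z) z.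
  move=> z zS; have [zc|zc] := eqVneq (z j) c.
    have -> : pi z = z by apply/ffunP => k; rewrite ffunE; case: eqP => // ->.
    exact: connect0.
  by apply: connect1; rewrite /sol_edge zS F3 zS adj1C adj1_setc.
have pipi : forall z, pi (pi z) = pi z.
  by move=> z; apply/ffunP => k; rewrite !ffunE; case: eqP.
apply: connect_trans (Hx _ xS) _; apply: connect_trans _ (Hy _ yS).
rewrite -(pipi x) -(pipi y); apply: connect_map Hedge _ _ _.
by apply: cA; apply: F2.
Qed.

Lemma skeleton (R : realType) d m n (C : 'M[R]_(m,n) -> Prop) :
  (forall A j, C A -> C (zcol A j)) ->
  (forall A, C A -> conn d A -> (forall j, nzcol A j -> ~~ can_elim A setT j) ->
     (exists j, nzcol A j) -> False) ->
  forall A, C A -> conn d A -> has_EO A.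
Proof.
move=> Cz Base A.
suff: forall k (A : 'M[R]_(m,n)), (#|[set j | nzcol A j]| <= k)%N -> C A -> conn d A -> has_EO A.
  by apply; apply: leqnn.
elim=> [|k IH] {}A Hk CA cA.
  apply: EO_zero => j; apply/negP => nzj.
  move: Hk; rewrite leqn0 cards_eq0 => /eqP /setP /(_ j).
  by rewrite !inE nzj.
case: (pickP (fun j => nzcol A j && can_elim A setT j)) => [j /andP [nzj cj] | none].
  apply: (EO_lift cj); apply: IH; [|exact: Cz|exact: conn_zcol].
  rewrite -ltnS; apply: leq_trans Hk; apply: proper_card; apply/properP; split.
    apply/subsetP => k'; rewrite !inE => /existsP [i]; rewrite mxE.
    have [_|_] := eqVneq k' j; rewrite ?eqxx //= => H; by apply/existsP; exists i.
  exists j; first by rewrite inE.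
  by rewrite inE; apply/existsPn => i; rewrite mxE eqxx negbK.
case: (pickP (fun j => nzcol A j)) => [j nzj | nonz].
  exfalso; apply: (Base A CA cA); last by exists j.
  by move=> j' nzj'; move: (none j'); rewrite nzj' /= => ->.
by apply: EO_zero => j; rewrite nonz.
Qed.

Definition keep2 (R : realType) m n (A : 'M[R]_(m,n)) (p q : 'I_m) : 'M[R]_(m,n) :=
  \matrix_(i, k) if (i == p) || (i == q) then A i k else 0.

Lemma lower_bound (R : realType) d n (a : 'I_n -> R) (z : point d n) :
  - (\sum_k `|a k| * (d%:R)) <= \sum_k a k * ((z k : nat)%:R).
Proof.
rewrite -sumrN; apply: ler_sum => k _.
have zd : ((z k : nat)%:R : R) <= d%:R by rewrite ler_nat -ltnS ltn_ord.
have z0 : (0 : R) <= (z k : nat)%:R by rewrite ler0n.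
have [a0|a0] := lerP 0 (a k).
  rewrite ger0_norm //; nra.
rewrite ltr0_norm //; nra.
Qed.

Lemma conn_keep2 (R : realType) d m n (A : 'M[R]_(m,n)) p q :
  conn d A -> conn d (keep2 A p q).
Proof.
move=> cA b x y xS yS.
have bneg : forall i, ~~ ((i == p) || (i == q)) -> b i <= 0.
  move=> i Hi; move: xS; rewrite inE => /forallP /(_ i).
  by rewrite big1 // => k _; rewrite mxE (negbTE Hi) mul0r.
pose b2 i := if (i == p) || (i == q) then b i else - (\sum_k `|A i k| * (d%:R)).
have E : solset d (keep2 A p q) b = solset d A b2.
  apply/setP => z; rewrite !inE; apply: eq_forallb => i; rewrite /b2.
  case: ifP => Hi.
    by congr (_ <= _); apply: eq_bigr => k _; rewrite mxE Hi.
  rewrite (lower_bound (fun k => A i k)) big1; first by rewrite bneg ?Hi.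
  by move=> k _; rewrite mxE Hi mul0r.
by rewrite E; apply: cA; rewrite -E.
Qed.

Lemma not_elim (R : realType) m n (A : 'M[R]_(m,n)) (J : {set 'I_n}) p q j j' :
  j' \in J -> j' != j -> A p j * A q j < 0 -> A p j' != 0 -> A q j' != 0 ->
  ~~ can_elim A J j.
Proof.
move=> j'J j'j H Ap Aq; rewrite /can_elim negb_and negb_or; apply/orP; right.
have [[pp qn]|[pn qp]] := mul_neg_cases H; apply/andP; split; apply/forallPn.
- exists p; rewrite negb_imply pp /=; apply/forallPn; exists j'.
  by rewrite !negb_imply j'J j'j.
- exists q; rewrite negb_imply qn /=; apply/forallPn; exists j'.
  by rewrite !negb_imply j'J j'j.
- exists q; rewrite negb_imply qp /=; apply/forallPn; exists j'.
  by rewrite !negb_imply j'J j'j.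
- exists p; rewrite negb_imply pn /=; apply/forallPn; exists j'.
  by rewrite !negb_imply j'J j'j.
Qed.

Lemma noEO (R : realType) m n (A : 'M[R]_(m,n)) p q j1 j2 :
  j1 != j2 -> A p j1 * A q j1 < 0 -> A p j2 * A q j2 < 0 -> ~ has_EO A.
Proof.
move=> nj o1 o2 [s /andP [ps es]].
have : j1 \in s by rewrite (perm_mem ps) mem_enum.
apply/negP; move: es; rewrite -/(is_true _).
have nz : forall j, A p j * A q j < 0 -> A p j != 0 /\ A q j != 0.
  by move=> j H; split; apply/eqP => E; move: H; rewrite E ?mul0r ?mulr0 ltxx.
have [n1 n1'] := nz _ o1; have [n2 n2'] := nz _ o2.
suff: forall (s : seq 'I_n) (J : {set 'I_n}), j1 \in J -> j2 \in J -> elim_seq A J s -> j1 \notin s.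
  by apply; rewrite in_setT.
elim=> //= k s' IH J j1J j2J /andP [ck es'].
have kj1 : k != j1.
  by apply/eqP => E; subst k; move: ck; apply/negP; apply: (not_elim j2J _ o1); rewrite // eq_sym.
have kj2 : k != j2.
  by apply/eqP => E; subst k; move: ck; apply/negP; apply: (not_elim j1J _ o2).
rewrite in_cons eq_sym (negbTE kj1) /=; apply: IH es'; rewrite in_setD1 ?j1J ?j2J eq_sym ?kj1 ?kj2 //.
Qed.

Definition aF (R : realType) m n (A : 'M[R]_(m,n)) (F : {set 'I_n}) i j :=
  if j \in F then - A i j else A i j.

Lemma keyF (R : realType) (a v d : R) : -a < 0 -> v + 1 <= d -> a * (v - d) <= - a.
Proof. move=> *; nra. Qed.
Lemma keyN (R : realType) (a v : R) : a < 0 -> 1 <= v -> a * (v - 0) <= a.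
Proof. move=> *; nra. Qed.

Lemma corner (R : realType) d m n (A : 'M[R]_(m,n)) (F Y : {set 'I_n}) :
  (0 < d)%N -> (exists2 j, j \in Y & nzcol A j) ->
  (forall j, nzcol A j -> exists i, aF A F i j < 0 /\ aF A F i j < \sum_(k in Y) aF A F i k) ->
  ~ conn d A.
Proof.
move=> d0 [j0 j0Y nz0] Hcol cA.
pose xs : point d n := [ffun k => if k \in F then ord_max else ord0].
pose ys : point d n := [ffun k => if k \in Y then (if k \in F then inord d.-1 else inord 1) else xs k].
have xsv : forall k, ((xs k : nat)%:R : R) = if k \in F then d%:R else 0.
  by move=> k; rewrite ffunE; case: ifP.
have ysv : forall k, ((ys k : nat)%:R : R) =
    (xs k : nat)%:R + (if k \in Y then (if k \in F then -1 else 1) else 0).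
  move=> k; rewrite [ys k]ffunE; case: ifP => kY; last by rewrite addr0.
  rewrite xsv; case: ifP => kF.
    rewrite inordK; last by rewrite ltnS leq_pred.
    by rewrite -[in RHS](prednK d0) -addn1 natrD addrK.
  by rewrite inordK ?ltnS // add0r.
pose sA (z : point d n) i := \sum_k A i k * ((z k : nat)%:R).
have sY : forall i, sA ys i = sA xs i + \sum_(k in Y) aF A F i k.
  move=> i; rewrite /sA (big_mkcond (fun k => k \in Y)) /= -big_split /=; apply: eq_bigr => k _.
  rewrite ysv /aF; case: ifP => kY; last by rewrite !addr0.
  by case: ifP => kF; rewrite mulrDr ?mulrN1 ?mulr1.
pose b i := Num.min (sA xs i) (sA ys i).
have xsS : xs \in solset d A b by rewrite inE; apply/forallP => i; rewrite ge_min lexx.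
have ysS : ys \in solset d A b by rewrite inE; apply/forallP => i; rewrite ge_min lexx orbT.
have Hc := cA b xs ys xsS ysS.
pose P (z : point d n) := [forall k, nzcol A k ==> (z k == xs k)].
have nP : P ys -> False.
  move=> /forallP /(_ j0); rewrite nz0 /= => /eqP E.
  have := congr1 (fun o : 'I_d.+1 => ((o : nat)%:R : R)) E; move=> /= H; move: H; rewrite ysv j0Y.
  by case: ifP => _; lra.
apply: nP; apply: (connect_inv (P:=P) _ _ Hc); last first.
  by apply/forallP => k; rewrite eqxx implybT.
move=> u v Pu /and3P [uS vS /cards1P [k0 Hk0]].
have same : forall k, k != k0 -> v k = u k.
  move=> k kk0; apply/eqP; rewrite eq_sym; apply/negPn/negP => H.
  have : k \in [set k | u k != v k] by rewrite inE.
  by rewrite Hk0 inE (negbTE kk0).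
have Pu' : forall k, nzcol A k -> u k = xs k.
  by move=> k nzk; move/forallP: Pu => /(_ k); rewrite nzk => /eqP.
apply/forallP => k; apply/implyP => nzk.
have [kk0|kk0] := eqVneq k k0; last by rewrite same // Pu'.
subst k; apply/negPn/negP => Hv.
have [i [Hi1 Hi2]] := Hcol k0 nzk.
have sv : sA v i = sA xs i + A i k0 * ((v k0 : nat)%:R - (xs k0 : nat)%:R).
  have : sA v i - sA xs i = A i k0 * ((v k0 : nat)%:R - (xs k0 : nat)%:R).
    rewrite /sA -sumrB (bigD1 k0) //= big1 ?addr0; first by rewrite mulrBr.
    move=> k kk; have [nzk'|zk'] := boolP (nzcol A k).
      by rewrite same // Pu' // subrr.
    have Aik : A i k = 0 by move/existsPn: zk' => /(_ i); rewrite negbK => /eqP.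
    by rewrite Aik !mul0r subrr.
  by move/eqP; rewrite subr_eq addrC => /eqP.
have vd : ((v k0 : nat) <= d)%N by rewrite -ltnS ltn_ord.
have key : A i k0 * ((v k0 : nat)%:R - (xs k0 : nat)%:R) <= aF A F i k0.
  move: Hv Hi1 Hi2; rewrite xsv /aF [xs k0]ffunE; case: ifP => kF Hv Hi1 Hi2.
    have : ((v k0 : nat) + 1 <= d)%N.
      have : (v k0 : nat) != d by move: Hv; apply: contra => /eqP E; apply/eqP; apply: ord_inj.
      by move=> H; rewrite addn1 ltn_neqAle H vd.
    rewrite -(ler_nat R) natrD => H1; exact: keyF.
  have : (1 <= (v k0 : nat))%N.
    have : (v k0 : nat) != 0%N by move: Hv; apply: contra => /eqP E; apply/eqP; apply: ord_inj.
    by rewrite lt0n.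
  rewrite -(ler_nat R) => H1; exact: keyN.
have Hlt : sA v i < b i.
  rewrite /b lt_min sv sY; move: key Hi1 Hi2; set t := A i k0 * _; set s := \sum_(k in Y) _.
  move=> H1 H2 H3; apply/andP; split.
    clear -H1 H2; lra.
  clear -H1 H2 H3; lra.
by move: vS; rewrite inE => /forallP /(_ i); rewrite leNgt Hlt.
Qed.

Lemma sum2 (R : realType) n (f : 'I_n -> R) j1 j2 : j1 != j2 ->
  \sum_(k in [set j1; j2]) f k = f j1 + f j2.
Proof. by move=> h; rewrite big_setU1 ?big_set1 // inE. Qed.

Lemma sum3 (R : realType) n (f : 'I_n -> R) j1 j2 j3 : j1 != j2 -> j1 != j3 -> j2 != j3 ->
  \sum_(k in [set j1; j2; j3]) f k = f j1 + f j2 + f j3.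
Proof.
move=> h12 h13 h23.
have -> : [set j1; j2; j3] = j1 |: [set j2; j3] by apply/setP => x; rewrite !inE orbA.
rewrite big_setU1 ?inE ?negb_or ?h12 ?h13 // sum2 // /=; exact: addrA.
Qed.

Lemma nonelim_unpack (R : realType) m n (A : 'M[R]_(m,n)) j : ~~ can_elim A setT j ->
  (exists i, 0 < A i j /\ exists k, k != j /\ A i k != 0) /\
  (exists i, A i j < 0 /\ exists k, k != j /\ A i k != 0).
Proof.
rewrite /can_elim in_setT /= negb_or => /andP [/forallPn [i Hi] /forallPn [i' Hi']].
move: Hi Hi'; rewrite !negb_imply => /andP [pos /forallPn [k Hk]] /andP [neg /forallPn [k' Hk']].
move: Hk Hk'; rewrite !negb_imply !in_setT /= => /andP [kj Aik] /andP [k'j Ai'k'].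
by split; [exists i; split => //; exists k | exists i'; split => //; exists k'].
Qed.

Lemma aF_pos_self (R : realType) (x : R) (c : bool) : x != 0 -> c = (x < 0) -> (if c then - x else x) = `|x|.
Proof. move=> x0 ->; case: ltP => h; [by rewrite ltr0_norm | by rewrite ger0_norm]. Qed.
Lemma aF_neg_self (R : realType) (x : R) (c : bool) : x != 0 -> c = (0 < x) -> (if c then - x else x) = - `|x|.
Proof.
move=> x0 ->; case: ltP => h; first by rewrite gtr0_norm.
have h' : x < 0 by rewrite lt_neqAle x0 h.
by rewrite ltr0_norm // opprK.
Qed.
Lemma aF_neg_norm (R : realType) (x y : R) (c : bool) : x * y < 0 -> c = (x < 0) -> (if c then - y else y) = - `|y|.
Proof.
move=> h ->; have [[a b]|[a b]] := mul_neg_cases h.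
  by rewrite ltNge (ltW a) /= ltr0_norm // opprK.
by rewrite a gtr0_norm.
Qed.
Lemma aF_pos_norm (R : realType) (x y : R) (c : bool) : x * y < 0 -> c = (0 < x) -> (if c then - y else y) = `|y|.
Proof.
move=> h ->; have [[a b]|[a b]] := mul_neg_cases h.
  by rewrite a ltr0_norm.
by rewrite ltNge (ltW a) /= gtr0_norm.
Qed.

Lemma nz_of_prod (R : realType) (x y : R) : x * y < 0 -> x != 0 /\ y != 0.
Proof. by move=> H; split; apply/eqP => E; move: H; rewrite E ?mul0r ?mulr0 ltxx. Qed.

Lemma C2_thm (R : realType) d m n (A : 'M[R]_(m,n)) p q : (0 < d)%N ->
  (forall i k, i != p -> i != q -> A i k = 0) -> conn d A -> has_EO A.
Proof.
move=> d0; apply: (skeleton (C := fun B => forall i k, i != p -> i != q -> B i k = 0)).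
  by move=> B j CB i k ip iq; rewrite mxE CB //; case: ifP.
move=> B CB cB Hne [j1 nz1].
have opp : forall j, nzcol B j -> B p j * B q j < 0.
  move=> j nzj; have [[i [pos _]] [i' [neg _]]] := nonelim_unpack (Hne j nzj).
  have inpq : forall i, B i j != 0 -> (i == p) || (i == q).
    move=> i0 h; apply/negPn/negP; rewrite negb_or => /andP [a b].
    by move: h; rewrite CB // eqxx.
  have /orP [/eqP ep|/eqP eq] := inpq i (lt0r_neq0 pos);
  have /orP [/eqP ep'|/eqP eq'] := inpq i' (ltr0_neq0 neg); subst; try lra.
    by rewrite pmulr_rlt0.
  by rewrite mulrC pmulr_rlt0.
have [_ [i [_ [j2 [j21 Aij2]]]]] := nonelim_unpack (Hne j1 nz1).
have nz2 : nzcol B j2 by apply/existsP; exists i.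
clear i Aij2.
wlog Hn : j1 j2 nz1 nz2 j21 / `|B q j1| <= `|B q j2|.
  move=> Hw; case: (lerP `|B q j1| `|B q j2|) => h; first exact: (Hw j1 j2).
  by apply: (Hw j2 j1) => //; [rewrite eq_sym | exact: ltW].
have j12 : j1 != j2 by rewrite eq_sym.
pose F := [set k | if k == j2 then 0 < B p k else B p k < 0].
apply: (@corner _ _ _ _ B F [set j1; j2] d0) => //.
  by exists j1; rewrite // !inE eqxx.
move=> k nzk.
have ok := opp k nzk; have o1 := opp j1 nz1; have o2 := opp j2 nz2.
have [nk nk'] := nz_of_prod ok; have [n1 n1'] := nz_of_prod o1; have [n2 n2'] := nz_of_prod o2.
have [kj2|kj2] := eqVneq k j2.
  subst k; exists p; rewrite sum2 // /aF !inE eqxx (negbTE j12).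
  rewrite (aF_neg_self n2) // (aF_pos_self n1) //.
  have := normr_gt0 (B p j1); have := normr_gt0 (B p j2); rewrite n1 n2 => h1 h2.
  split; lra.
exists q; rewrite sum2 // /aF !inE eqxx (negbTE j12) (negbTE kj2).
rewrite (aF_neg_norm ok) // (aF_neg_norm o1) // (aF_pos_norm o2) //.
have := normr_gt0 (B q k); rewrite nk' => h.
split; lra.
Qed.

Lemma caseA (R : realType) d m n (A : 'M[R]_(m,n)) p q j1 j2 : (0 < d)%N -> conn d A ->
  j1 != j2 -> A p j1 * A q j1 < 0 -> A p j2 * A q j2 < 0 -> False.
Proof.
move=> d0 cA j12 o1 o2.
have hE : has_EO (keep2 A p q).
  apply: (@C2_thm R d m n (keep2 A p q) p q d0) => [i k ip iq|].
    by rewrite mxE (negbTE ip) (negbTE iq).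
  exact: conn_keep2.
apply: (@noEO R m n (keep2 A p q) p q j1 j2 j12 _ _ hE); by rewrite !mxE !eqxx /= ?orbT.
Qed.

Lemma pn (R : realType) (x y : R) : 0 < x -> y < 0 -> x * y < 0.
Proof. by move=> a b; rewrite pmulr_rlt0. Qed.
Lemma np (R : realType) (x y : R) : x < 0 -> 0 < y -> x * y < 0.
Proof. by move=> a b; rewrite mulrC pmulr_rlt0. Qed.

Lemma two_ord n (a b c : 'I_n) : (n <= 2)%N -> b != a -> c != a -> b = c.
Proof.
move=> hn ba ca; apply: ord_inj.
have ha := ltn_ord a; have hb := ltn_ord b; have hc := ltn_ord c.
have ba' : (b : nat) <> a by move=> h; move/eqP: ba; apply; apply: val_inj.
have ca' : (c : nat) <> a by move=> h; move/eqP: ca; apply; apply: val_inj.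
move: hn ha hb hc ba' ca'; clear; move: (b : nat) (c : nat) (a : nat) => x y z; lia.
Qed.

Lemma three_rows m (P Q R X : 'I_m) : (m <= 3)%N -> P != Q -> R != P -> R != Q ->
  X = P \/ X = Q \/ X = R.
Proof.
move=> hm PQ RP RQ.
have [->|XP] := eqVneq X P; first by left.
have [->|XQ] := eqVneq X Q; first by right; left.
have [->|XR] := eqVneq X R; first by right; right.
exfalso.
have hP := ltn_ord P; have hQ := ltn_ord Q; have hR := ltn_ord R; have hX := ltn_ord X.
have h1 : forall a b : 'I_m, a != b -> (a : nat) <> b.
  by move=> a b /eqP ab h; apply: ab; apply: val_inj.
move: (h1 _ _ PQ) (h1 _ _ RP) (h1 _ _ RQ) (h1 _ _ XP) (h1 _ _ XQ) (h1 _ _ XR) hP hQ hR hX hm.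
clear; move: (P : nat) (Q : nat) (R : nat) (X : nat) => a b c e; lia.
Qed.

Lemma base_n2 (R : realType) m n (A : 'M[R]_(m,n)) : (n <= 2)%N ->
  (forall p q c c', A p c * A q c < 0 -> A p c' * A q c' < 0 -> c = c') ->
  (forall j, nzcol A j -> ~~ can_elim A setT j) -> (exists j, nzcol A j) -> False.
Proof.
move=> hn U Hne [j nzj].
have [[i [pi [k [kj Aik]]]] [i' [ni' [k' [k'j Ai'k']]]]] := nonelim_unpack (Hne j nzj).
have ekk := two_ord hn kj k'j; subst k'.
have nzk : nzcol A k by apply/existsP; exists i.
have [[r [pr [j' [j'k Arj']]]] [s [ns [j'' [j''k Asj'']]]]] := nonelim_unpack (Hne k nzk).
have jk : j != k by rewrite eq_sym.
have ej' := two_ord hn j'k jk; have ej'' := two_ord hn j''k jk; subst j' j''.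
have C : forall X Y, A X j * A Y j < 0 -> A X k * A Y k < 0 -> False.
  by move=> X Y h1 h2; move/eqP: jk; apply; exact: U h1 h2.
case: (ltrgtP (A i k) 0) => hik; last by move: Aik; rewrite hik eqxx.
  case: (ltrgtP (A i' k) 0) => hi'k; last by move: Ai'k'; rewrite hi'k eqxx.
    case: (ltrgtP (A r j) 0) => hrj; last by move: Arj'; rewrite hrj eqxx.
      by apply: (C i r); [apply: pn | apply: np].
    by apply: (C r i'); apply: pn.
  by apply: (C i i'); [apply: pn | apply: np].
case: (ltrgtP (A i' k) 0) => hi'k; last by move: Ai'k'; rewrite hi'k eqxx.
  by apply: (C i i'); apply: pn.
case: (ltrgtP (A s j) 0) => hsj; last by move: Asj''; rewrite hsj eqxx.
  by apply: (C s i); apply: np.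
by apply: (C s i'); [apply: pn | apply: np].
Qed.

Lemma base_m3 (R : realType) d m n (A : 'M[R]_(m,n)) : (0 < d)%N -> (m <= 3)%N -> conn d A ->
  (forall p q c c', A p c * A q c < 0 -> A p c' * A q c' < 0 -> c = c') ->
  (forall j, nzcol A j -> ~~ can_elim A setT j) -> (exists j, nzcol A j) -> False.
Proof.
move=> d0 hm cA U Hne [c1 nz1].
pose opp X Y c := A X c * A Y c < 0.
have oppC : forall X Y c, opp X Y c -> opp Y X c by move=> X Y c; rewrite /opp mulrC.
have NE : forall c, nzcol A c -> exists X Y, opp X Y c /\ (exists k, k != c /\ A X k != 0)
    /\ (exists k, k != c /\ A Y k != 0).
  move=> c nzc; have [[X [pX oX]] [Y [nY oY]]] := nonelim_unpack (Hne c nzc).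
  by exists X, Y; split => //; apply: pn.
have H1 : forall X Y Z c, opp X Z c -> A Y c != 0 -> opp X Y c \/ opp Y Z c.
  by move=> X Y Z c; apply: mul_neg3.
have oneq : forall X Y c, opp X Y c -> X != Y.
  move=> X Y c h; apply/eqP => E; subst; move: h; rewrite /opp ltNge -expr2.
  by rewrite sqr_ge0.
have nzof : forall X c, A X c != 0 -> nzcol A c by move=> X c h; apply/existsP; exists X.
have neqU : forall X Y c c', opp X Y c -> opp X Y c' -> c != c' -> False.
  by move=> X Y c c' h h' /eqP; apply; exact: U h h'.
have [P [Q [o1 [[cP [cPc1 APcP]] [c2 [c2c1 AQc2]]]]]] := NE c1 nz1.
have nz2 := nzof _ _ AQc2.
have PQ := oneq _ _ _ o1.
have notPQ2 : ~ opp P Q c2 by move=> h; apply: (neqU _ _ _ _ o1 h); rewrite eq_sym.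
have [Rr [RP [RQ [o2 [c3 [c3c2 ARc3]]]]]] : exists Rr, Rr != P /\ Rr != Q /\ opp Q Rr c2 /\
    (exists k, k != c2 /\ A Rr k != 0).
  have gen : forall X Y, opp X Y c2 -> (exists k, k != c2 /\ A X k != 0) -> X != P -> X != Q ->
      exists Rr, Rr != P /\ Rr != Q /\ opp Q Rr c2 /\ (exists k, k != c2 /\ A Rr k != 0).
    move=> X Y o oX XP XQ; exists X; do 2 split => //; split => //.
    have [EY|[EY|EY]] := three_rows Y hm PQ XP XQ; subst Y.
    - have [h|h] := H1 _ Q _ _ o AQc2; first exact: oppC.
      by exfalso; apply: notPQ2; apply: oppC.
    - exact: oppC.
    - by move: (oneq _ _ _ o); rewrite eqxx.
  have [X [Y [oXY [oX oY]]]] := NE c2 nz2.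
  case XPQ: ((X != P) && (X != Q)); first by case/andP: XPQ => XP XQ; exact: (gen X Y).
  case YPQ: ((Y != P) && (Y != Q)); first by case/andP: YPQ => YP YQ; exact: (gen Y X (oppC _ _ _ oXY)).
  exfalso; move/negbT: XPQ; move/negbT: YPQ; rewrite !negb_and !negbK.
  have XY := oneq _ _ _ oXY.
  case/orP => /eqP EY; case/orP => /eqP EX; subst; rewrite ?eqxx in XY => //.
    by apply: notPQ2; apply: oppC.
have rows := fun X => three_rows X hm PQ RP RQ.
have PL : forall c X Y, opp X Y c -> opp P Q c \/ opp P Rr c \/ opp Q Rr c.
  move=> c X Y o; have XY := oneq _ _ _ o.
  have [EX|[EX|EX]] := rows X; have [EY|[EY|EY]] := rows Y; subst; rewrite ?eqxx in XY => //.
  - by left.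
  - by right; left.
  - by left; apply: oppC.
  - by right; right.
  - by right; left; apply: oppC.
  - by right; right; apply: oppC.
have AR1 : A Rr c1 = 0.
  apply/eqP/negPn/negP => h.
  have [oPR1|oRQ1] := H1 _ Rr _ _ o1 h; last first.
    by apply: (neqU _ _ _ _ (oppC _ _ _ oRQ1) o2); rewrite eq_sym.
  have nzP := nzof _ _ APcP.
  have [X [Y [oXY _]]] := NE cP nzP.
  have [h'|[h'|h']] := PL _ _ _ oXY.
  - by apply: (neqU _ _ _ _ o1 h'); rewrite eq_sym.
  - by apply: (neqU _ _ _ _ oPR1 h'); rewrite eq_sym.
  have ec := U _ _ _ _ o2 h'; subst cP.
  have [h2|h2] := H1 _ P _ _ o2 APcP.
    by apply: notPQ2; apply: oppC.
  by apply: (neqU _ _ _ _ oPR1 h2); rewrite eq_sym.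
have c3c1 : c3 != c1 by apply/eqP => E; move: ARc3; rewrite E AR1 eqxx.
have nz3 := nzof _ _ ARc3.
have o3 : opp P Rr c3.
  have [X [Y [oXY _]]] := NE c3 nz3.
  have [h'|[h'|h']] := PL _ _ _ oXY => //.
    by exfalso; apply: (neqU _ _ _ _ o1 h'); rewrite eq_sym.
  by exfalso; apply: (neqU _ _ _ _ o2 h'); rewrite eq_sym.
have AQ3 : A Q c3 = 0.
  apply/eqP/negPn/negP => h.
  have [h'|h'] := H1 _ Q _ _ o3 h.
    by apply: (neqU _ _ _ _ o1 h'); rewrite eq_sym.
  by apply: (neqU _ _ _ _ o2 h'); rewrite eq_sym.
have AP2 : A P c2 = 0.
  apply/eqP/negPn/negP => h.
  have [h'|h'] := H1 _ P _ _ o2 h.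
    by apply: notPQ2; apply: oppC.
  by apply: (neqU _ _ _ _ o3 h').
have others : forall k, nzcol A k -> k = c1 \/ k = c2 \/ k = c3.
  move=> k nzk; have [X [Y [oXY _]]] := NE k nzk.
  have [h'|[h'|h']] := PL _ _ _ oXY.
  - by left; apply: U h' o1.
  - by right; right; apply: U h' o3.
  - by right; left; apply: U h' o2.
have c12 : c1 != c2 by rewrite eq_sym.
have c13 : c1 != c3 by rewrite eq_sym.
have c23 : c2 != c3 by rewrite eq_sym.
have c21 := c2c1; have c31 := c3c1; have c32 := c3c2.
pose F := [set k | ((k == c1) && (A P k < 0)) || ((k == c2) && (A Q k < 0)) || ((k == c3) && (A Rr k < 0))].
apply: (@corner _ _ _ _ A F [set c1; c2; c3] d0) => //.
  by exists c1; rewrite // !inE eqxx.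
have [n1 n1'] := nz_of_prod o1; have [n2 n2'] := nz_of_prod o2; have [n3 n3'] := nz_of_prod o3.
move=> k nzk; have [->|[->|->]] := others k nzk.
- exists Q; rewrite sum3 // /aF !inE !eqxx ?(negbTE c12) ?(negbTE c13) ?(negbTE c21) ?(negbTE c23)
    ?(negbTE c31) ?(negbTE c32) /= ?orbF AQ3 oppr0 if_same.
  rewrite (aF_neg_norm o1) // (aF_pos_self n2) //.
  have := normr_gt0 (A Q c1); have := normr_gt0 (A Q c2); rewrite n1' n2 => h1 h2.
  split; lra.
- exists Rr; rewrite sum3 // /aF !inE !eqxx ?(negbTE c12) ?(negbTE c13) ?(negbTE c21) ?(negbTE c23)
    ?(negbTE c31) ?(negbTE c32) /= ?orbF AR1 oppr0 if_same.
  rewrite (aF_neg_norm o2) // (aF_pos_self n3') //.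
  have := normr_gt0 (A Rr c2); have := normr_gt0 (A Rr c3); rewrite n2' n3' => h1 h2.
  split; lra.
- exists P; rewrite sum3 // /aF !inE !eqxx ?(negbTE c12) ?(negbTE c13) ?(negbTE c21) ?(negbTE c23)
    ?(negbTE c31) ?(negbTE c32) /= ?orbF AP2 oppr0 if_same.
  rewrite (aF_pos_self n1) // (aF_neg_norm (oppC _ _ _ o3)) //.
  have := normr_gt0 (A P c1); have := normr_gt0 (A P c3); rewrite n1 n3 => h1 h2.
  split; lra.
Qed.

Unset Implicit Arguments.
Theorem theorem2 (R : realType) (d m n : nat) (A : 'M[R]_(m, n)) :
  (0 < d)%N ->
  (forall b : 'I_m -> R, sol_graph_connected (solset d A b)) ->
  (m <= 3)%N \/ (n <= 2)%N ->
  has_EO A.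
Proof.
move=> d0 cA hmn.
have cA' : conn d A := cA.
apply: (@skeleton R d m n (fun _ => True) _ _ A I cA') => // B _ cB Hne ex.
have U : forall p q c c', B p c * B q c < 0 -> B p c' * B q c' < 0 -> c = c'.
  move=> p q c c' h1 h2; apply/eqP/negPn/negP => hc; exact: (caseA d0 cB hc h1 h2).
by case: hmn => [hm|hn]; [exact: (base_m3 d0 hm cB U Hne ex) | exact: (base_n2 hn U Hne ex)].
Qed.
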